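(* Let $\alpha$ be a unit speed Frenet curve in $\mathbb{E}^3$ and $\beta$ an osculating mate of $\alpha$. Then: (i) $\alpha$ is a plane curve if and only if $\beta$ is a plane curve; (ii) $\alpha$ is a general helix if and only if $\beta$ is a slant helix.
   Context: $\alpha:I\to\mathbb{E}^3$ is parametrized by arclength $s$, with Frenet frame $\{T,N,B\}$, curvature $\kappa>0$, torsion $\tau$. An osculating mate of $\alpha$ is a curve $\beta(s)=\int(x_1T+x_2N)ds$ with smooth $x_1,x_2$, $x_1^2+x_2^2=1$ and $\beta''\perp\mathrm{span}\{T,N\}$; $\beta$ is assumed to be a Frenet curve, unit speed in $s$, with curvature $\bar\kappa$ and torsion $\bar\tau$. A general helix is a curve whose tangent makes a constant angle with a fixed direction, equivalently $\tau/\kappa$ is constant. A slant helix is a curve whose principal normal makes a constant angle with a fixed direction, equivalently $\sigma=\frac{\kappa^2}{(\kappa^2+\tau^2)^{3/2}}\left(\frac{\tau}{\kappa}\right)'$ is constant (computed with the curve's own curvature and torsion). *)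

(* Defs.v *)
From Stdlib Require Import Reals.
From Coquelicot Require Import Coquelicot.
Open Scope R_scope.

Definition V3 := (R * R * R)%type.
Definition mkV (x y z : R) : V3 := (x, y, z).
Definition vx (v : V3) : R := fst (fst v).
Definition vy (v : V3) : R := snd (fst v).
Definition vz (v : V3) : R := snd v.
Definition vzero : V3 := mkV 0 0 0.
Definition vadd (u v : V3) : V3 := mkV (vx u + vx v) (vy u + vy v) (vz u + vz v).
Definition vsub (u v : V3) : V3 := mkV (vx u - vx v) (vy u - vy v) (vz u - vz v).
Definition vscal (c : R) (v : V3) : V3 := mkV (c * vx v) (c * vy v) (c * vz v).
Definition dot (u v : V3) : R := vx u * vx v + vy u * vy v + vz u * vz v.
Definition cross (u v : V3) : V3 :=
  mkV (vy u * vz v - vz u * vy v) (vz u * vx v - vx u * vz v) (vx u * vy v - vy u * vx v).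
Definition vnorm (v : V3) : R := sqrt (dot v v).

Definition inI (a b : Rbar) (s : R) : Prop := Rbar_lt a s /\ Rbar_lt s b.

Definition smooth_fun (a b : Rbar) (f : R -> R) : Prop :=
  forall (n : nat) (s : R), inI a b s -> ex_derive (Derive_n f n) s.

Definition smooth_curve (a b : Rbar) (g : R -> V3) : Prop :=
  smooth_fun a b (fun t => vx (g t)) /\
  smooth_fun a b (fun t => vy (g t)) /\
  smooth_fun a b (fun t => vz (g t)).

Definition dcurve (g : R -> V3) (s : R) : V3 :=
  mkV (Derive (fun t => vx (g t)) s) (Derive (fun t => vy (g t)) s)
      (Derive (fun t => vz (g t)) s).

(** Frenet apparatus of a unit speed curve g (parameter = arclength):
    T = g', kappa = |T'|, N = T'/kappa, B = T x N, tau = <N', B>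
    (so that T' = kappa N, N' = -kappa T + tau B, B' = -tau N). *)
Definition tangent (g : R -> V3) (s : R) : V3 := dcurve g s.
Definition curvature (g : R -> V3) (s : R) : R := vnorm (dcurve (tangent g) s).
Definition normal (g : R -> V3) (s : R) : V3 :=
  vscal (/ curvature g s) (dcurve (tangent g) s).
Definition binormal (g : R -> V3) (s : R) : V3 := cross (tangent g s) (normal g s).
Definition torsion (g : R -> V3) (s : R) : R := dot (dcurve (normal g) s) (binormal g s).

Definition unit_speed_frenet_curve (a b : Rbar) (g : R -> V3) : Prop :=
  smooth_curve a b g /\
  (forall s, inI a b s -> vnorm (dcurve g s) = 1) /\
  (forall s, inI a b s -> 0 < curvature g s).

Definition osculating_mate (a b : Rbar) (alpha beta : R -> V3) (x1 x2 : R -> R) : Prop :=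
  smooth_fun a b x1 /\ smooth_fun a b x2 /\
  (forall s, inI a b s -> x1 s ^ 2 + x2 s ^ 2 = 1) /\
  (forall s, inI a b s ->
     ex_derive (fun t => vx (beta t)) s /\ ex_derive (fun t => vy (beta t)) s /\
     ex_derive (fun t => vz (beta t)) s) /\
  (forall s, inI a b s ->
     dcurve beta s = vadd (vscal (x1 s) (tangent alpha s)) (vscal (x2 s) (normal alpha s))) /\
  (forall s, inI a b s ->
     dot (dcurve (dcurve beta) s) (tangent alpha s) = 0 /\
     dot (dcurve (dcurve beta) s) (normal alpha s) = 0).

Definition plane_curve (a b : Rbar) (g : R -> V3) : Prop :=
  exists p n : V3, n <> vzero /\ forall s, inI a b s -> dot (vsub (g s) p) n = 0.

(** General helix: the tangent makes a constant angle with a fixed direction u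
    (|u| = 1), i.e. <T, u> = cos(angle) is constant. *)
Definition general_helix (a b : Rbar) (g : R -> V3) : Prop :=
  exists (u : V3) (c : R), vnorm u = 1 /\ forall s, inI a b s -> dot (tangent g s) u = c.

Definition slant_helix (a b : Rbar) (g : R -> V3) : Prop :=
  exists (u : V3) (c : R), vnorm u = 1 /\ forall s, inI a b s -> dot (normal g s) u = c.

(* Main.v *)
Require Import Defs.
From Stdlib Require Import Reals Lra.
From Coquelicot Require Import Coquelicot.
Open Scope R_scope.

Lemma d_mult f g x df dg : is_derive f x df -> is_derive g x dg ->
  is_derive (fun t => f t * g t) x (df * g x + f x * dg).
Proof. intros; apply (is_derive_mult f g x df dg); auto; intros; apply Rmult_comm. Qed.
Lemma d_plus f g x df dg : is_derive f x df -> is_derive g x dg ->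
  is_derive (fun t => f t + g t) x (df + dg).
Proof. intros; apply (is_derive_plus f g x df dg); auto. Qed.
Lemma d_minus f g x df dg : is_derive f x df -> is_derive g x dg ->
  is_derive (fun t => f t - g t) x (df - dg).
Proof. intros; apply (is_derive_minus f g x df dg); auto. Qed.
Lemma d_const (c : R) (x : R) : @is_derive R_AbsRing R_NormedModule (fun _ : R => c) x 0.
Proof. apply (is_derive_const c x). Qed.
Lemma d_eq (f : R -> R) (x l l' : R) : is_derive f x l -> l = l' -> is_derive f x l'.
Proof. intros; subst; auto. Qed.

Definition vder (f : R -> V3) s (d : V3) :=
  is_derive (fun t => vx (f t)) s (vx d) /\ is_derive (fun t => vy (f t)) s (vy d) /\
  is_derive (fun t => vz (f t)) s (vz d).

Lemma V3_eq u v : vx u = vx v -> vy u = vy v -> vz u = vz v -> u = v.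
Proof. destruct u as [[u1 u2] u3]; destruct v as [[v1 v2] v3]; unfold vx, vy, vz; simpl; intros; subst; auto. Qed.

Lemma vder_dcurve f s d : vder f s d -> dcurve f s = d.
Proof. intros [h1 [h2 h3]]; apply V3_eq; unfold dcurve, vx, vy, vz, mkV; simpl;
 apply is_derive_unique; auto. Qed.

Lemma inI_locally a b s : inI a b s -> locally s (inI a b).
Proof. intros H. unfold inI in *. apply (open_and (fun u : R => Rbar_lt a u) (fun u : R => Rbar_lt u b)); auto.
 apply open_Rbar_gt. apply open_Rbar_lt. Qed.

Lemma d_ext_loc a b (f g : R -> R) (s l : R) : (forall t, inI a b t -> f t = g t) -> inI a b s ->
  is_derive g s l -> is_derive f s l.
Proof. intros He Hs Hd. apply (is_derive_ext_loc g f); auto.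
 generalize (inI_locally a b s Hs). apply filter_imp. intros; symmetry; auto. Qed.

Lemma loc_const a b (f : R -> R) (c s l : R) : (forall t, inI a b t -> f t = c) -> inI a b s ->
  is_derive f s l -> l = 0.
Proof. intros He Hs Hd. assert (H : is_derive f s 0).
 { apply (d_ext_loc a b f (fun _ => c)); auto. apply d_const. }
 apply is_derive_unique in H; apply is_derive_unique in Hd. congruence. Qed.

Lemma vder_ext_loc a b f g s d : (forall t, inI a b t -> f t = g t) -> inI a b s ->
  vder g s d -> vder f s d.
Proof. intros He Hs [h1 [h2 h3]]; split; [|split];
 [apply (d_ext_loc a b _ (fun t => vx (g t)))|apply (d_ext_loc a b _ (fun t => vy (g t)))|
  apply (d_ext_loc a b _ (fun t => vz (g t)))]; auto; intros t Ht; rewrite He; auto. Qed.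

Lemma vder_dot f h s df dh : vder f s df -> vder h s dh ->
  is_derive (fun t => dot (f t) (h t)) s (dot df (h s) + dot (f s) dh).
Proof. intros [f1 [f2 f3]] [h1 [h2 h3]]. unfold dot.
 eapply d_eq. apply d_plus; [apply d_plus|]; apply d_mult; eauto. simpl; ring. Qed.

Lemma vder_const u s : vder (fun _ => u) s vzero.
Proof. split; [|split]; apply d_const. Qed.

Lemma vder_dotc f s df u : vder f s df -> is_derive (fun t => dot (f t) u) s (dot df u).
Proof. intros H. eapply d_eq. apply (vder_dot f (fun _ => u) s df vzero); auto. apply vder_const.
 unfold dot, vzero, mkV, vx, vy, vz; simpl; ring. Qed.

Lemma vder_cross f h s df dh : vder f s df -> vder h s dh ->
  vder (fun t => cross (f t) (h t)) s (vadd (cross df (h s)) (cross (f s) dh)).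
Proof. intros [f1 [f2 f3]] [h1 [h2 h3]]. unfold cross, vadd, mkV, vx, vy, vz in *; simpl.
 split; [|split]; (eapply d_eq; [apply d_minus; apply d_mult; eauto| unfold vx, vy, vz; simpl; ring]). Qed.

Lemma vder_add f h s df dh : vder f s df -> vder h s dh ->
  vder (fun t => vadd (f t) (h t)) s (vadd df dh).
Proof. intros [f1 [f2 f3]] [h1 [h2 h3]]. unfold vadd, mkV, vx, vy, vz in *; simpl.
 split; [|split]; apply d_plus; auto. Qed.

Lemma vder_scal c f s dc df : is_derive c s dc -> vder f s df ->
  vder (fun t => vscal (c t) (f t)) s (vadd (vscal dc (f s)) (vscal (c s) df)).
Proof. intros hc [f1 [f2 f3]]. unfold vscal, vadd, mkV, vx, vy, vz in *; simpl.
 split; [|split]; apply d_mult; auto. Qed.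

Lemma vder_subc f s df p : vder f s df -> vder (fun t => vsub (f t) p) s df.
Proof. intros [f1 [f2 f3]]. unfold vsub, mkV, vx, vy, vz in *; simpl.
 split; [|split]; (eapply d_eq; [apply d_minus; [eauto| apply d_const]|unfold vx, vy, vz; simpl; ring]). Qed.

Ltac vunf := unfold dot, cross, vadd, vsub, vscal, vzero, mkV, vx, vy, vz; simpl.

Lemma dot_comm u v : dot u v = dot v u.
Proof. vunf; ring. Qed.
Lemma dot_scal_l c v u : dot (vscal c v) u = c * dot v u.
Proof. vunf; ring. Qed.
Lemma dot_add_l v w u : dot (vadd v w) u = dot v u + dot w u.
Proof. vunf; ring. Qed.
Lemma dot_sub_l v w u : dot (vsub v w) u = dot v u - dot w u.
Proof. vunf; ring. Qed.
Lemma dot_zero_l u : dot vzero u = 0.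
Proof. vunf; ring. Qed.
Lemma dot_cross_l1 a b : dot (cross a b) a = 0.
Proof. vunf; ring. Qed.
Lemma dot_cross_l2 a b : dot (cross a b) b = 0.
Proof. vunf; ring. Qed.
Lemma cross_self a : cross a a = vzero.
Proof. apply V3_eq; vunf; ring. Qed.
Lemma triple a w u : dot (cross a w) u = dot w (cross u a).
Proof. vunf; ring. Qed.
Lemma binet a b c d : dot (cross a b) (cross c d) = dot a c * dot b d - dot a d * dot b c.
Proof. vunf; ring. Qed.
Lemma dot_ge0 u : 0 <= dot u u.
Proof. vunf; nra. Qed.
Lemma dot_pos u : u <> vzero -> 0 < dot u u.
Proof. intros H. destruct u as [[u1 u2] u3]. unfold vzero, mkV in H. vunf.
 destruct (Req_dec u1 0); destruct (Req_dec u2 0); destruct (Req_dec u3 0); subst;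
 try (exfalso; apply H; reflexivity); nra. Qed.

Lemma vx_vadd u w : vx (vadd u w) = vx u + vx w. Proof. reflexivity. Qed.
Lemma vy_vadd u w : vy (vadd u w) = vy u + vy w. Proof. reflexivity. Qed.
Lemma vz_vadd u w : vz (vadd u w) = vz u + vz w. Proof. reflexivity. Qed.
Lemma vx_vscal c w : vx (vscal c w) = c * vx w. Proof. reflexivity. Qed.
Lemma vy_vscal c w : vy (vscal c w) = c * vy w. Proof. reflexivity. Qed.
Lemma vz_vscal c w : vz (vscal c w) = c * vz w. Proof. reflexivity. Qed.

Lemma bac_id T N v :
  vx v * dot (cross T N) (cross T N) - vx (cross T N) * dot (cross T N) v =
  dot v N * (vx N * dot T T - vx T * dot T N) - dot v T * (vx N * dot N T - vx T * dot N N)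
 /\
  vy v * dot (cross T N) (cross T N) - vy (cross T N) * dot (cross T N) v =
  dot v N * (vy N * dot T T - vy T * dot T N) - dot v T * (vy N * dot N T - vy T * dot N N)
 /\
  vz v * dot (cross T N) (cross T N) - vz (cross T N) * dot (cross T N) v =
  dot v N * (vz N * dot T T - vz T * dot T N) - dot v T * (vz N * dot N T - vz T * dot N N).
Proof. vunf; split; [|split]; ring. Qed.

Lemma decomp_vec T N v : dot T T = 1 -> dot N N = 1 -> dot T N = 0 ->
  v = vadd (vadd (vscal (dot v T) T) (vscal (dot v N) N)) (vscal (dot v (cross T N)) (cross T N)).
Proof. intros h1 h2 h3.
 assert (hB : dot (cross T N) (cross T N) = 1) by (rewrite binet, h1, h2, h3; ring).
 assert (h4 : dot N T = 0) by (rewrite dot_comm; auto).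
 destruct (bac_id T N v) as [e1 [e2 e3]]. rewrite hB, h1, h2, h3, h4 in e1, e2, e3.
 rewrite (dot_comm (cross T N) v) in e1, e2, e3.
 set (B := cross T N) in *. set (p := dot v T) in *. set (q := dot v N) in *. set (r := dot v B) in *.
 apply V3_eq; rewrite ?vx_vadd, ?vy_vadd, ?vz_vadd, ?vx_vscal, ?vy_vscal, ?vz_vscal; lra.
Qed.

Lemma decomp T N v u : dot T T = 1 -> dot N N = 1 -> dot T N = 0 ->
  dot v u = dot v T * dot T u + dot v N * dot N u + dot v (cross T N) * dot (cross T N) u.
Proof. intros h1 h2 h3. rewrite (decomp_vec T N v h1 h2 h3) at 1.
 rewrite !dot_add_l, !dot_scal_l. ring. Qed.

Lemma vder_of_ex f s : ex_derive (fun t => vx (f t)) s -> ex_derive (fun t => vy (f t)) s ->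
  ex_derive (fun t => vz (f t)) s -> vder f s (dcurve f s).
Proof. intros h1 h2 h3; split; [|split]; apply Derive_correct; auto. Qed.

Lemma sqrt_pos_inv x : 0 < sqrt x -> 0 < x.
Proof. intros H. destruct (Rle_dec x 0) as [h|h]; [|lra]. rewrite sqrt_neg_0 in H; lra. Qed.


Lemma fr_T a b g s : unit_speed_frenet_curve a b g -> inI a b s -> vder g s (tangent g s).
Proof. intros [[hx [hy hz]] _] Hs. apply vder_of_ex.
 exact (hx 0%nat s Hs). exact (hy 0%nat s Hs). exact (hz 0%nat s Hs). Qed.

Lemma fr_dT a b g s : unit_speed_frenet_curve a b g -> inI a b s ->
  vder (tangent g) s (dcurve (tangent g) s).
Proof. intros [[hx [hy hz]] _] Hs. apply vder_of_ex.
 exact (hx 1%nat s Hs). exact (hy 1%nat s Hs). exact (hz 1%nat s Hs). Qed.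

Lemma fr_ddT a b g s : unit_speed_frenet_curve a b g -> inI a b s ->
  vder (dcurve (tangent g)) s (dcurve (dcurve (tangent g)) s).
Proof. intros [[hx [hy hz]] _] Hs. apply vder_of_ex.
 exact (hx 2%nat s Hs). exact (hy 2%nat s Hs). exact (hz 2%nat s Hs). Qed.

Lemma fr_kpos a b g s : unit_speed_frenet_curve a b g -> inI a b s -> 0 < curvature g s.
Proof. intros [_ [_ h]] Hs; auto. Qed.

Lemma fr_kappa2 a b g s : unit_speed_frenet_curve a b g -> inI a b s ->
  curvature g s * curvature g s = dot (dcurve (tangent g) s) (dcurve (tangent g) s).
Proof. intros H Hs. unfold curvature, vnorm. rewrite sqrt_sqrt; auto. apply dot_ge0. Qed.

Lemma fr_ex_kappa a b g s : unit_speed_frenet_curve a b g -> inI a b s ->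
  ex_derive (fun t => curvature g t) s.
Proof. intros H Hs. pose proof (fr_kpos a b g s H Hs) as hk.
 pose proof (fr_ddT a b g s H Hs) as hd.
 pose proof (vder_dot _ _ _ _ _ hd hd) as hdd.
 unfold curvature, vnorm in *. eexists. apply is_derive_sqrt. exact hdd.
 apply sqrt_pos_inv; auto. Qed.

Lemma fr_N a b g s : unit_speed_frenet_curve a b g -> inI a b s ->
  vder (normal g) s (dcurve (normal g) s).
Proof. intros H Hs. pose proof (fr_kpos a b g s H Hs) as hk.
 assert (hi : ex_derive (fun t => / curvature g t) s).
 { apply (ex_derive_inv (fun t => curvature g t)). apply (fr_ex_kappa a b g s H Hs). lra. }
 destruct (fr_ddT a b g s H Hs) as [h1 [h2 h3]].
 apply vder_of_ex; unfold normal, vscal, mkV, vx, vy, vz in *; simpl;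
 apply (ex_derive_mult (fun t => / curvature g t)); auto; eexists; eauto. Qed.

Lemma fr_dT_eq a b g s : unit_speed_frenet_curve a b g -> inI a b s ->
  dcurve (tangent g) s = vscal (curvature g s) (normal g s).
Proof. intros H Hs. pose proof (fr_kpos a b g s H Hs) as hk. unfold normal.
 apply V3_eq; rewrite ?vx_vscal, ?vy_vscal, ?vz_vscal; field; lra. Qed.

Lemma fr_TT a b g s : unit_speed_frenet_curve a b g -> inI a b s ->
  dot (tangent g s) (tangent g s) = 1.
Proof. intros [_ [h _]] Hs. specialize (h s Hs). unfold vnorm in h. unfold tangent.
 rewrite <- (sqrt_sqrt (dot (dcurve g s) (dcurve g s))) by apply dot_ge0. rewrite h; ring. Qed.

Lemma fr_NN a b g s : unit_speed_frenet_curve a b g -> inI a b s ->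
  dot (normal g s) (normal g s) = 1.
Proof. intros H Hs. pose proof (fr_kpos a b g s H Hs) as hk.
 pose proof (fr_kappa2 a b g s H Hs) as e. unfold normal. rewrite dot_scal_l, dot_comm, dot_scal_l.
 rewrite <- e. field. lra. Qed.

Lemma fr_TN a b g s : unit_speed_frenet_curve a b g -> inI a b s ->
  dot (tangent g s) (normal g s) = 0.
Proof. intros H Hs. pose proof (fr_kpos a b g s H Hs) as hk.
 pose proof (fr_dT a b g s H Hs) as hd.
 pose proof (vder_dot _ _ _ _ _ hd hd) as hdd.
 pose proof (loc_const a b _ 1 s _ (fun t Ht => fr_TT a b g t H Ht) Hs hdd) as e.
 rewrite (fr_dT_eq a b g s H Hs), dot_scal_l, (dot_comm (tangent g s)), dot_scal_l in e.
 rewrite dot_comm. nra. Qed.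

Lemma fr_dNN a b g s : unit_speed_frenet_curve a b g -> inI a b s ->
  dot (dcurve (normal g) s) (normal g s) = 0.
Proof. intros H Hs. pose proof (fr_N a b g s H Hs) as hd.
 pose proof (vder_dot _ _ _ _ _ hd hd) as hdd.
 pose proof (loc_const a b _ 1 s _ (fun t Ht => fr_NN a b g t H Ht) Hs hdd) as e.
 rewrite (dot_comm (normal g s)) in e. lra. Qed.

Lemma fr_dNT a b g s : unit_speed_frenet_curve a b g -> inI a b s ->
  dot (dcurve (normal g) s) (tangent g s) = - curvature g s.
Proof. intros H Hs. pose proof (fr_N a b g s H Hs) as hd.
 pose proof (fr_dT a b g s H Hs) as ht.
 pose proof (vder_dot _ _ _ _ _ hd ht) as hdd.
 assert (c : forall t, inI a b t -> dot (normal g t) (tangent g t) = 0).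
 { intros t Ht; rewrite dot_comm; apply (fr_TN a b g t H Ht). }
 pose proof (loc_const a b _ 0 s _ c Hs hdd) as e.
 rewrite (fr_dT_eq a b g s H Hs), (dot_comm (normal g s)), dot_scal_l, (fr_NN a b g s H Hs) in e.
 lra. Qed.

Lemma fr_dotT a b g s u : unit_speed_frenet_curve a b g -> inI a b s ->
  is_derive (fun t => dot (tangent g t) u) s (curvature g s * dot (normal g s) u).
Proof. intros H Hs. eapply d_eq. apply vder_dotc. apply (fr_dT a b g s H Hs).
 rewrite (fr_dT_eq a b g s H Hs), dot_scal_l. reflexivity. Qed.

Lemma fr_dotN a b g s u : unit_speed_frenet_curve a b g -> inI a b s ->
  is_derive (fun t => dot (normal g t) u) s
    (- curvature g s * dot (tangent g s) u + torsion g s * dot (binormal g s) u).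
Proof. intros H Hs. eapply d_eq. apply vder_dotc. apply (fr_N a b g s H Hs).
 rewrite (decomp (tangent g s) (normal g s) _ u (fr_TT a b g s H Hs) (fr_NN a b g s H Hs)
   (fr_TN a b g s H Hs)).
 rewrite (fr_dNT a b g s H Hs), (fr_dNN a b g s H Hs). unfold torsion, binormal. ring. Qed.

Lemma cross_scal_self c v u : dot (cross (vscal c v) v) u = 0.
Proof. vunf; ring. Qed.
Lemma dot_cross_self2 T u : dot T (cross u T) = 0.
Proof. vunf; ring. Qed.

Lemma fr_dotB a b g s u : unit_speed_frenet_curve a b g -> inI a b s ->
  is_derive (fun t => dot (binormal g t) u) s (- torsion g s * dot (normal g s) u).
Proof. intros H Hs. eapply d_eq. unfold binormal. apply vder_dotc.
 apply vder_cross. apply (fr_dT a b g s H Hs). apply (fr_N a b g s H Hs).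
 rewrite dot_add_l, (fr_dT_eq a b g s H Hs), cross_scal_self, triple.
 rewrite (decomp (tangent g s) (normal g s) _ _ (fr_TT a b g s H Hs) (fr_NN a b g s H Hs)
   (fr_TN a b g s H Hs)).
 rewrite (fr_dNN a b g s H Hs), dot_cross_self2, binet, (fr_TT a b g s H Hs),
   (dot_comm (normal g s) (tangent g s)), (fr_TN a b g s H Hs).
 unfold torsion, binormal. ring. Qed.

Lemma inI_between a b s0 s x : inI a b s0 -> inI a b s -> Rmin s0 s <= x <= Rmax s0 s -> inI a b x.
Proof. intros [h1 h2] [h3 h4] [hl hr]. unfold inI.
 destruct (Rle_dec s0 s) as [h|h].
 - rewrite Rmin_left in hl by lra. rewrite Rmax_right in hr by lra. split.
   apply (Rbar_lt_le_trans a s0 x); auto; simpl; lra.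
   apply (Rbar_le_lt_trans x s b); auto; simpl; lra.
 - rewrite Rmin_right in hl by lra. rewrite Rmax_left in hr by lra. split.
   apply (Rbar_lt_le_trans a s x); auto; simpl; lra.
   apply (Rbar_le_lt_trans x s0 b); auto; simpl; lra. Qed.

Lemma const_of_d0 a b (f : R -> R) : (forall t, inI a b t -> is_derive f t 0) ->
  forall s0 s, inI a b s0 -> inI a b s -> f s = f s0.
Proof. intros H s0 s h0 h.
 destruct (MVT_gen f s0 s (fun _ => 0)) as [c [_ e]].
 - intros x hx. apply H. apply (inI_between a b s0 s); auto; lra.
 - intros x hx. apply continuity_pt_filterlim. apply (ex_derive_continuous f).
   eexists. apply H. apply (inI_between a b s0 s); auto.
 - lra. Qed.

Lemma I_ne a b : Rbar_lt a b -> exists s, inI a b s.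
Proof. unfold inI. destruct a as [x| |]; destruct b as [y| |]; simpl; intros H; try contradiction.
 - exists ((x + y) / 2); simpl; split; lra.
 - exists (x + 1); simpl; split; auto; lra.
 - exists (y - 1); simpl; split; auto; lra.
 - exists 0; simpl; split; auto. Qed.

Lemma sq_const a b (f df : R -> R) c : (forall t, inI a b t -> is_derive f t (df t)) ->
  (forall t, inI a b t -> f t * f t = c * c) -> forall t, inI a b t -> df t = 0.
Proof. intros hd hs t ht. destruct (Req_dec c 0) as [hc|hc].
 - subst c. apply (loc_const a b f 0 t); auto. intros t' ht'. specialize (hs t' ht'). nra.
 - pose proof (d_mult _ _ _ _ _ (hd t ht) (hd t ht)) as hm.
   pose proof (loc_const a b (fun t => f t * f t) (c * c) t _ hs ht hm) as e.
   assert (f t <> 0). { intro z. specialize (hs t ht). rewrite z in hs. nra. }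
   apply (Rmult_eq_reg_l (2 * f t)); [|lra]. lra. Qed.

Lemma decompB a b g s v u : unit_speed_frenet_curve a b g -> inI a b s ->
  dot v u = dot v (tangent g s) * dot (tangent g s) u + dot v (normal g s) * dot (normal g s) u
            + dot v (binormal g s) * dot (binormal g s) u.
Proof. intros H Hs. exact (decomp _ _ v u (fr_TT a b g s H Hs) (fr_NN a b g s H Hs) (fr_TN a b g s H Hs)). Qed.

Lemma fr_BB a b g s : unit_speed_frenet_curve a b g -> inI a b s ->
  dot (binormal g s) (binormal g s) = 1.
Proof. intros H Hs. unfold binormal. rewrite binet, (fr_TT a b g s H Hs), (fr_NN a b g s H Hs),
 (fr_TN a b g s H Hs). ring. Qed.

Lemma dot_cross_r1 a b : dot a (cross a b) = 0.
Proof. unfold dot, cross, mkV, vx, vy, vz; simpl; ring. Qed.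
Lemma dot_cross_r2 a b : dot b (cross a b) = 0.
Proof. unfold dot, cross, mkV, vx, vy, vz; simpl; ring. Qed.

Theorem corollary5 (a b : Rbar) (alpha beta : R -> V3) (x1 x2 : R -> R) :
  Rbar_lt a b ->
  unit_speed_frenet_curve a b alpha ->
  osculating_mate a b alpha beta x1 x2 ->
  unit_speed_frenet_curve a b beta ->
  (plane_curve a b alpha <-> plane_curve a b beta) /\
  (general_helix a b alpha <-> slant_helix a b beta).
Proof.
 intros Hab Ha Hm Hb. destruct Hm as [sx1 [sx2 [hsq [hbd [hb1 hperp]]]]].
 destruct (I_ne a b Hab) as [s0 Hs0].
 set (T := tangent alpha). set (N := normal alpha). set (Bn := binormal alpha).
 set (k := curvature alpha). set (tau := torsion alpha).
 set (W := fun s => vadd (vadd (vscal (Derive x1 s) (T s)) (vscal (x1 s) (dcurve T s)))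
                         (vadd (vscal (Derive x2 s) (N s)) (vscal (x2 s) (dcurve N s)))).
 assert (M1 : forall s, inI a b s -> vder (dcurve beta) s (W s)).
 { intros s Hs. apply (vder_ext_loc a b _ (fun t => vadd (vscal (x1 t) (T t)) (vscal (x2 t) (N t))));
   auto. apply vder_add; apply vder_scal.
   apply Derive_correct; exact (sx1 0%nat s Hs). apply (fr_dT a b alpha s Ha Hs).
   apply Derive_correct; exact (sx2 0%nat s Hs). apply (fr_N a b alpha s Ha Hs). }
 assert (M1e : forall s, inI a b s -> dcurve (dcurve beta) s = W s).
 { intros s Hs; apply vder_dcurve; auto. }
 assert (M2 : forall s, inI a b s -> dot (W s) (Bn s) = x2 s * tau s).
 { intros s Hs. unfold W. rewrite !dot_add_l, !dot_scal_l. unfold T.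
   rewrite (fr_dT_eq a b alpha s Ha Hs), dot_scal_l. unfold Bn, binormal.
   rewrite ?dot_cross_r1, ?dot_cross_r2.
   unfold tau, torsion, binormal, N. ring. }
 assert (M2T : forall s, inI a b s -> Derive x1 s = k s * x2 s).
 { intros s Hs. destruct (hperp s Hs) as [p1 _]. rewrite M1e in p1 by auto. unfold W in p1.
   rewrite !dot_add_l, !dot_scal_l in p1. unfold T in p1.
   rewrite (fr_dT_eq a b alpha s Ha Hs), dot_scal_l in p1.
   rewrite (fr_TT a b alpha s Ha Hs), (dot_comm (normal alpha s)), (fr_TN a b alpha s Ha Hs) in p1.
   unfold N in p1. rewrite (fr_dNT a b alpha s Ha Hs) in p1. rewrite (dot_comm (normal alpha s) (tangent alpha s)), (fr_TN a b alpha s Ha Hs) in p1. unfold k. lra. }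
 assert (M3 : forall s, inI a b s -> dcurve (dcurve beta) s = vscal (x2 s * tau s) (Bn s)).
 { intros s Hs. rewrite (decomp_vec (T s) (N s) (dcurve (dcurve beta) s)
     (fr_TT a b alpha s Ha Hs) (fr_NN a b alpha s Ha Hs) (fr_TN a b alpha s Ha Hs)).
   destruct (hperp s Hs) as [p1 p2]. unfold T, N. rewrite p1, p2.
   change (cross (tangent alpha s) (normal alpha s)) with (Bn s).
   rewrite M1e, M2 by auto. apply V3_eq; rewrite ?vx_vadd, ?vy_vadd, ?vz_vadd, ?vx_vscal, ?vy_vscal, ?vz_vscal; ring. }
 assert (M4 : forall s, inI a b s -> curvature beta s * curvature beta s = (x2 s * tau s) * (x2 s * tau s)).
 { intros s Hs. rewrite (fr_kappa2 a b beta s Hb Hs). unfold tangent. rewrite M3 by auto.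
   rewrite dot_scal_l, dot_comm, dot_scal_l. unfold Bn. rewrite (fr_BB a b alpha s Ha Hs). ring. }
 assert (M4' : forall s, inI a b s -> x2 s * tau s <> 0).
 { intros s Hs z. pose proof (M4 s Hs) as e. rewrite z in e. pose proof (fr_kpos a b beta s Hb Hs). nra. }
 assert (M6 : forall s u, inI a b s -> dot (normal beta s) u * dot (normal beta s) u = dot (Bn s) u * dot (Bn s) u).
 { intros s u Hs. pose proof (M4 s Hs) as e. pose proof (fr_kpos a b beta s Hb Hs) as hk.
   unfold normal. rewrite dot_scal_l. unfold tangent. rewrite M3 by auto. rewrite dot_scal_l.
   set (kb := curvature beta s) in *. set (m := x2 s * tau s) in *. set (X := dot (Bn s) u).
   replace (/ kb * (m * X) * (/ kb * (m * X))) with ((m * m) / (kb * kb) * (X * X)) by (field; lra).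
   rewrite <- e. field. lra. }
 split.
 - split; intros Hp; exfalso.
   + destruct Hp as [p [n [hn hp]]].
     assert (hTn : forall t, inI a b t -> dot (T t) n = 0).
     { intros t Ht. apply (loc_const a b (fun t => dot (vsub (alpha t) p) n) 0 t); auto.
       apply vder_dotc. apply vder_subc. apply (fr_T a b alpha t Ha Ht). }
     assert (hNn : forall t, inI a b t -> dot (N t) n = 0).
     { intros t Ht. pose proof (loc_const a b _ 0 t _ hTn Ht (fr_dotT a b alpha t n Ha Ht)) as e.
       pose proof (fr_kpos a b alpha t Ha Ht). unfold N. nra. }
     pose proof (loc_const a b _ 0 s0 _ hNn Hs0 (fr_dotN a b alpha s0 n Ha Hs0)) as e.
     pose proof (hTn s0 Hs0) as e1. unfold T in e1. rewrite e1 in e.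
     pose proof (decompB a b alpha s0 n n Ha Hs0) as d.
     rewrite (dot_comm n (tangent alpha s0)), (dot_comm n (normal alpha s0)), e1 in d.
     pose proof (hNn s0 Hs0) as e2. unfold N in e2. rewrite e2 in d.
     pose proof (dot_pos n hn). pose proof (M4' s0 Hs0). unfold tau in *.
     assert (torsion alpha s0 = 0). { rewrite (dot_comm n (binormal alpha s0)) in d. assert (dot (binormal alpha s0) n <> 0) by (intro z; rewrite z in d; lra). apply (Rmult_eq_reg_r (dot (binormal alpha s0) n)); lra. } apply H0. rewrite H1. ring.
   + destruct Hp as [p [n [hn hp]]].
     assert (h1 : forall t, inI a b t -> dot (dcurve beta t) n = 0).
     { intros t Ht. apply (loc_const a b (fun t => dot (vsub (beta t) p) n) 0 t); auto.
       apply vder_dotc. apply vder_subc. apply (fr_T a b beta t Hb Ht). }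
     assert (h2 : forall t, inI a b t -> dot (dcurve (dcurve beta) t) n = 0).
     { intros t Ht. rewrite M1e by auto. apply (loc_const a b _ 0 t _ h1 Ht). apply vder_dotc. auto. }
     assert (h3 : forall t, inI a b t -> dot (Bn t) n = 0).
     { intros t Ht. pose proof (h2 t Ht) as e. rewrite M3, dot_scal_l in e by auto.
       pose proof (M4' t Ht). apply (Rmult_eq_reg_l (x2 t * tau t)); auto. lra. }
     assert (h4 : forall t, inI a b t -> dot (N t) n = 0).
     { intros t Ht. pose proof (loc_const a b _ 0 t _ h3 Ht (fr_dotB a b alpha t n Ha Ht)) as e.
       pose proof (M4' t Ht). unfold tau in *. unfold N.
       assert (torsion alpha t <> 0) by (intro z; apply H; rewrite z; ring). 
       apply (Rmult_eq_reg_l (torsion alpha t)); auto. lra. }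
     assert (h5 : forall t, inI a b t -> x1 t = 0).
     { intros t Ht. pose proof (h1 t Ht) as e. rewrite hb1, dot_add_l, !dot_scal_l in e by auto.
       pose proof (h4 t Ht) as e4. unfold N in e4. rewrite e4 in e.
       pose proof (decompB a b alpha t n n Ha Ht) as d.
       rewrite (dot_comm n (normal alpha t)), e4, (dot_comm n (binormal alpha t)) in d.
       pose proof (h3 t Ht) as e3. unfold Bn in e3. rewrite e3 in d.
       pose proof (dot_pos n hn). rewrite (dot_comm n (tangent alpha t)) in d. assert (dot (tangent alpha t) n <> 0) by (intro z; rewrite z in d; lra). apply (Rmult_eq_reg_r (dot (tangent alpha t) n)); lra. }
     pose proof (loc_const a b x1 0 s0 _ h5 Hs0 (Derive_correct _ _ (sx1 0%nat s0 Hs0))) as e.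
     rewrite M2T in e by auto. pose proof (fr_kpos a b alpha s0 Ha Hs0). pose proof (M4' s0 Hs0).
     unfold k in e. assert (x2 s0 = 0) by nra. apply H0. rewrite H1. ring.
 - split.
   + intros [u [c [hu hc]]].
     assert (hN : forall t, inI a b t -> dot (N t) u = 0).
     { intros t Ht. pose proof (loc_const a b _ c t _ hc Ht (fr_dotT a b alpha t u Ha Ht)) as e.
       pose proof (fr_kpos a b alpha t Ha Ht). unfold N. nra. }
     assert (hB : forall t, inI a b t -> dot (Bn t) u = dot (Bn s0) u).
     { intros t0 Ht0. apply (const_of_d0 a b (fun t => dot (Bn t) u)); auto. intros t Ht.
       eapply d_eq. apply (fr_dotB a b alpha t u Ha Ht). pose proof (hN t Ht) as e. unfold N in e.
       rewrite e. ring. }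
     assert (hf : forall t, inI a b t -> dot (dcurve (normal beta) t) u = 0).
     { apply (sq_const a b (fun t => dot (normal beta t) u) _ (dot (Bn s0) u)).
       intros t Ht. apply vder_dotc. apply (fr_N a b beta t Hb Ht).
       intros t Ht. rewrite M6 by auto. rewrite hB by auto. reflexivity. }
     exists u, (dot (normal beta s0) u). split; auto. intros s Hs.
     apply (const_of_d0 a b (fun t => dot (normal beta t) u)); auto. intros t Ht.
     eapply d_eq. apply vder_dotc. apply (fr_N a b beta t Hb Ht). auto.
   + intros [u [c [hu hc]]].
     assert (hd : forall t, inI a b t -> - torsion alpha t * dot (normal alpha t) u = 0).
     { apply (sq_const a b (fun t => dot (Bn t) u) _ c).
       intros t Ht. apply (fr_dotB a b alpha t u Ha Ht).
       intros t Ht. rewrite <- M6 by auto. rewrite hc by auto. reflexivity. }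
     assert (hN : forall t, inI a b t -> dot (normal alpha t) u = 0).
     { intros t Ht. pose proof (hd t Ht) as e. pose proof (M4' t Ht). unfold tau in *.
       assert (torsion alpha t <> 0) by (intro z; apply H; rewrite z; ring).
       apply (Rmult_eq_reg_l (- torsion alpha t)). lra. lra. }
     exists u, (dot (tangent alpha s0) u). split; auto. intros s Hs.
     apply (const_of_d0 a b (fun t => dot (tangent alpha t) u)); auto. intros t Ht.
     eapply d_eq. apply (fr_dotT a b alpha t u Ha Ht). rewrite hN by auto. ring.
Qed.
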